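(* Let $\Gamma$ be a metrized graph and $p$ a vertex of $\Gamma$. For an edge $e_i$ of $\Gamma$ with end points $p_i$ and $q_i$, $$r(p_i,p)+r(q_i,p)=2\,r_{\overline{\Gamma}_i}(p,\bar p_i)+\frac{L_i R_i}{L_i+R_i}-2\,\frac{L_i R_{a_i,p} R_{b_i,p}}{R_i(L_i+R_i)}.$$
   Context: A metrized graph $\Gamma$ is a finite connected graph (multiple edges and self-loops allowed) each of whose edges is identified with a closed segment of positive length, with a finite nonempty vertex set $V(\Gamma)$ containing every point of valence $\neq2$; $L_i$ is the length of $e_i$. $r$ (resp. $r_\beta$) is the effective resistance in $\Gamma$ (resp. $\beta$), edges being resistors of resistance equal to length. If $\Gamma-e_i$ (interior of $e_i$ deleted) is connected, $R_i$ is the effective resistance between $p_i,q_i$ in $\Gamma-e_i$, $R_{a_i,p}=\hat j_{p_i}(p,q_i)$, $R_{b_i,p}=\hat j_{q_i}(p,p_i)$ with $\hat j_z(x,y)$ the voltage function of $\Gamma-e_i$ (potential at $x$ when unit current enters at $y$ and exits at $z$, potential $0$ at $z$), so $R_{a_i,p}+R_{b_i,p}=R_i$. If $e_i$ is a bridge, $R_{a_i,p}=0,R_{b_i,p}=R_i$ when $p$ is in the component of $\Gamma-e_i$ containing $p_i$, and $R_{a_i,p}=R_i,R_{b_i,p}=0$ otherwise, and every expression involving $R_i$ is interpreted as its limit as $R_i\to\infty$. $\overline\Gamma_i$ is obtained by contracting $e_i$ to a point (identifying $p_i$ and $q_i$), with vertex set the image of $V(\Gamma)$, and $\bar p_i$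 denotes the vertex into which $p_i$ is contracted; $p$ also denotes its image in $\overline\Gamma_i$. *)

(* Defs.v *)
From HB Require Import structures.
From mathcomp Require Import all_boot all_order all_algebra.
From Stdlib Require Import ClassicalEpsilon.
Set Implicit Arguments. Unset Strict Implicit. Unset Printing Implicit Defensive.
Import Order.TTheory GRing.Theory Num.Theory.
Local Open Scope ring_scope.

(* A metrized graph is modelled combinatorially: a finite vertex type V,
   a finite edge type E (multiple edges and self-loops allowed), endpoint maps
   src dst : E -> V and edge lengths len : E -> R (positive).  Since every
   point used in the statement is a vertex, all resistances are between
   vertices, and the resistance between vertices only depends on this data. *)

Section Network.
Variables (R : realFieldType) (V E : finType) (src dst : E -> V) (len : E -> R).

Definition adjG : rel V :=
  fun x y => [exists e, ((src e == x) && (dst e == y)) || ((dst e == x) && (src e == y))].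

Definition connectedG : bool := [forall x : V, forall y : V, connect adjG x y].

(* net current flowing out of vertex w for the potential f
   (edge e is a resistor of resistance len e) *)
Definition outflow (f : V -> R) (w : V) : R :=
  \sum_(e : E) ((if src e == w then (f w - f (dst e)) / len e else 0)
              + (if dst e == w then (f w - f (src e)) / len e else 0)).

(* f is the voltage function j_z(., y): unit current enters at y, exits at z,
   potential 0 at z *)
Definition is_voltage (z y : V) (f : V -> R) : Prop :=
  f z = 0 /\ forall w, outflow f w = (w == y)%:R - (w == z)%:R.

(* j_z(x,y); on a connected network with positive lengths the solution exists
   and is unique, so this choice is canonical. *)
Definition voltage (z y : V) : V -> R :=
  match excluded_middle_informative (exists f, is_voltage z y f) with
  | left H => proj1_sig (constructive_indefinite_description _ H)
  | right _ => fun _ => 0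
  end.

Definition jz (z x y : V) : R := voltage z y x.

Definition eff_res (x y : V) : R := jz y x x.

End Network.

Definition del_edges (E : finType) (e : E) := {e' : E | e' != e}.

Definition del_end (V E : finType) (e : E) (s : E -> V) : del_edges e -> V :=
  fun e' => s (val e').

Definition del_len (R : Type) (E : finType) (e : E) (len : E -> R) : del_edges e -> R :=
  fun e' => len (val e').

(* ---- contraction of an edge with endpoints p q: identify q with p ---- *)
Definition cvert (V : finType) (p q : V) := {x : V | (x != q) || (p == q)}.

Lemma cvert_p (V : finType) (p q : V) : (p != q) || (p == q).
Proof. by case: (p == q). Qed.

Definition cmap (V : finType) (p q : V) (x : V) : cvert p q :=
  insubd (exist _ p (cvert_p p q) : cvert p q) x.

Definition con_end (V E : finType) (e : E) (p q : V) (s : E -> V)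
  : del_edges e -> cvert p q := fun e' => cmap p q (s (val e')).

Arguments del_end [V E] e s _.
Arguments del_len [R E] e len _.
Arguments con_end [V E] e p q s _.

(* Main.v *)
Require Import Defs.
From HB Require Import structures.
From mathcomp Require Import all_boot all_order all_algebra.
From mathcomp Require Import ring lra.
From Stdlib Require Import ClassicalEpsilon.
Set Implicit Arguments. Unset Strict Implicit. Unset Printing Implicit Defensive.
Import Order.TTheory GRing.Theory Num.Theory.
Local Open Scope ring_scope.


Section Gen.
Variables (R : realFieldType) (V E : finType) (src dst : E -> V) (len : E -> R).
Hypothesis Hlen : forall e, 0 < len e.

Local Notation outflow := (outflow src dst len).
Local Notation d y := (fun w : V => ((w == y)%:R : R)).

Lemma sum_delta (G : V -> R) y : \sum_w G w * (w == y)%:R = G y.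
Proof.
rewrite (bigD1 y) //= eqxx mulr1 big1 ?addr0 // => w /negbTE ->; by rewrite mulr0.
Qed.

Lemma sum_if (G : V -> R) y : \sum_w (if y == w then G w else 0) = G y.
Proof.
rewrite (bigD1 y) //= eqxx big1 ?addr0 // => w; rewrite eq_sym => /negbTE ->; by [].
Qed.

Lemma outflow_swap (G f : V -> R) :
  \sum_w G w * outflow f w =
  \sum_e (G (src e) * (f (src e) - f (dst e)) + G (dst e) * (f (dst e) - f (src e))) / len e.
Proof.
rewrite /Defs.outflow.
under eq_bigr do rewrite mulr_sumr.
rewrite exchange_big /=; apply: eq_bigr => e _.
rewrite mulrDl -!mulrA.
rewrite -(sum_if (fun w => G w * ((f w - f (dst e)) / len e)) (src e)).
rewrite -(sum_if (fun w => G w * ((f w - f (src e)) / len e)) (dst e)).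
rewrite -big_split /=; apply: eq_bigr => w _.
rewrite mulrDr; congr (_ + _); case: eqP; rewrite ?mulr0 //.
Qed.

Lemma green (G f : V -> R) :
  \sum_w G w * outflow f w =
  \sum_e (G (src e) - G (dst e)) * (f (src e) - f (dst e)) / len e.
Proof. rewrite outflow_swap; apply: eq_bigr => e _; congr (_ / _); ring. Qed.

Lemma green_sym (f g : V -> R) :
  \sum_w f w * outflow g w = \sum_w g w * outflow f w.
Proof. rewrite !green; apply: eq_bigr => e _; congr (_ / _); ring. Qed.

Lemma outflow_lin (a b c : R) (f g : V -> R) w :
  outflow (fun v => a * f v + b * g v + c) w = a * outflow f w + b * outflow g w.
Proof.
rewrite /Defs.outflow !mulr_sumr -big_split; apply: eq_bigr => e _ /=.
by case: ifP; case: ifP => _ _; rewrite ?mulr0 ?addr0; ring.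
Qed.

Lemma outflow_ext (f g : V -> R) w : f =1 g -> outflow f w = outflow g w.
Proof. move=> H; rewrite /Defs.outflow; apply: eq_bigr => e _; by rewrite !H. Qed.

Lemma outflow_sum (I : Type) (s : seq I) (G : I -> V -> R) w :
  outflow (fun v => \sum_(i <- s) G i v) w = \sum_(i <- s) outflow (G i) w.
Proof.
elim: s => [|i s IH].
  rewrite big_nil (outflow_ext (g := fun v => 0 * (fun _ => 0 : R) v + 0 * (fun _ => 0 : R) v + 0)).
    by rewrite outflow_lin; ring.
  by move=> v /=; rewrite big_nil; ring.
rewrite big_cons -IH (outflow_ext (g := fun v => 1 * G i v + 1 * \sum_(j <- s) G j v + 0)).
  by rewrite outflow_lin !mul1r.
by move=> v /=; rewrite big_cons; ring.
Qed.

Lemma sum_outflow (f : V -> R) : \sum_w outflow f w = 0.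
Proof.
have -> : \sum_w outflow f w = \sum_w (fun _ => 1) w * outflow f w.
  by apply: eq_bigr => w _; rewrite mul1r.
by rewrite green big1 // => e _; rewrite subrr !mul0r.
Qed.

Lemma sum_closed (T : pred V) (f : V -> R) : (forall e, T (src e) = T (dst e)) ->
  \sum_w (T w)%:R * outflow f w = 0.
Proof.
move=> HT; rewrite green big1 // => e _; by rewrite HT subrr !mul0r.
Qed.

Lemma outflow_closed (T : pred V) w : (forall e, T (src e) = T (dst e)) ->
  outflow (fun v => (T v)%:R) w = 0.
Proof.
move=> HT; rewrite /Defs.outflow big1 // => e _.
case: eqP => [<-|_]; case: eqP => [<-|_]; by rewrite ?HT ?subrr ?mul0r ?addr0 ?add0r.
Qed.

Lemma energy0 (h : V -> R) :
  \sum_e (h (src e) - h (dst e)) * (h (src e) - h (dst e)) / len e = 0 ->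
  forall e, h (src e) = h (dst e).
Proof.
move=> E0 e; move/eqP: E0; rewrite psumr_eq0 => [/allP H|e' _].
  have := H e (mem_index_enum e); rewrite /= mulf_eq0 invr_eq0 (gt_eqF (Hlen e)) orbF.
  by rewrite mulf_eq0 orbb subr_eq0 => /eqP.
by apply: divr_ge0; [rewrite -expr2 sqr_ge0 | exact: ltW].
Qed.

Hypothesis Hconn : connectedG src dst.

Lemma adjG_sym : symmetric (adjG src dst).
Proof.
move=> x y; apply/existsP/existsP => -[e He]; exists e; move: He;
  by case/orP => /andP[-> ->]; rewrite ?orbT.
Qed.

Lemma harmonic0 (h : V -> R) z : (forall w, outflow h w = 0) -> h z = 0 -> forall x, h x = 0.
Proof.
move=> Hh hz.
have E0 : \sum_e (h (src e) - h (dst e)) * (h (src e) - h (dst e)) / len e = 0.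
  by rewrite -green big1 // => w _; rewrite Hh mulr0.
have Hed : forall e, h (src e) = h (dst e).
  move=> e; move/eqP: E0; rewrite psumr_eq0 => [/allP H|e' _].
    have := H e (mem_index_enum e); rewrite /= mulf_eq0 invr_eq0 (gt_eqF (Hlen e)) orbF.
    by rewrite mulf_eq0 orbb subr_eq0 => /eqP.
  by apply: divr_ge0; [rewrite -expr2 sqr_ge0 | exact: ltW].
have Hadj : forall x y, adjG src dst x y -> h x = h y.
  move=> x y /existsP[e /orP[/andP[/eqP<- /eqP<-]|/andP[/eqP<- /eqP<-]]]; by rewrite Hed.
move=> x; have : connect (adjG src dst) z x by move/forallP: Hconn => /(_ z)/forallP/(_ x).
case/connectP => p; elim: p z hz => [|y p IH] z hz /=; first by move=> _ ->.
by case/andP => /Hadj hzy Hp Hx; apply: (IH y) => //; rewrite -hzy.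
Qed.

Lemma is_voltage_uniq z y f g : is_voltage src dst len z y f -> is_voltage src dst len z y g ->
  forall x, f x = g x.
Proof.
move=> [fz Hf] [gz Hg] x.
have := @harmonic0 (fun v => 1 * f v + (-1) * g v + 0) z _ _ x.
  move=> H; apply/eqP; rewrite -subr_eq0; apply/eqP; rewrite -H; last first.
  by rewrite fz gz; ring.
  by move=> w; rewrite outflow_lin Hf Hg; ring.
ring.
Qed.

Lemma sum_delta1 (y : V) : \sum_w ((w == y)%:R : R) = 1.
Proof.
rewrite -[RHS](sum_delta (fun _ => 1) y); apply: eq_bigr => w _; by rewrite mul1r.
Qed.

Lemma outflow_scale a (f : V -> R) w : outflow (fun v => a * f v) w = a * outflow f w.
Proof.
rewrite -[RHS]addr0 -(mul0r (outflow f w)) -(outflow_lin a 0 0 f f); apply: outflow_ext => v; ring.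
Qed.

Lemma voltage_exists z y : exists f, is_voltage src dst len z y f.
Proof.
pose n := #|V|.
pose T (f : V -> R) (w : V) := if w == z then f z else outflow f w.
pose A : 'M[R]_n := \matrix_(i, j) T (fun w => (w == enum_val i)%:R) (enum_val j).
have HA : forall (v : 'rV_n) j, (v *m A) 0 j = T (fun w => v 0 (enum_rank w)) (enum_val j).
  move=> v j; rewrite !mxE.
  under eq_bigr do rewrite mxE.
  have Hf : (fun w => v 0 (enum_rank w)) =1 (fun w => \sum_i v 0 i * (w == enum_val i)%:R).
    move=> w /=; rewrite (bigD1 (enum_rank w)) //= enum_rankK eqxx mulr1 big1 ?addr0 // => i Hi.
    case: eqP => [Hw|_]; last by rewrite mulr0.
    by rewrite Hw enum_valK eqxx in Hi.
  rewrite /T; case: ifP => _; first by rewrite Hf.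
  rewrite (outflow_ext _ Hf) outflow_sum; apply: eq_bigr => i _.
  by rewrite outflow_scale.
have HT : forall (v : 'rV_n) w, T (fun w => v 0 (enum_rank w)) w = (v *m A) 0 (enum_rank w).
  by move=> v w; rewrite HA enum_rankK.
have Hinj : forall v : 'rV_n, v *m A = 0 -> v = 0.
  move=> v Hv.
  have HT0 : forall w, T (fun w => v 0 (enum_rank w)) w = 0 by move=> w; rewrite HT Hv mxE.
  have Hz : v 0 (enum_rank z) = 0 by have := HT0 z; rewrite /T eqxx.
  have Ho : forall w, outflow (fun w => v 0 (enum_rank w)) w = 0.
    have Hne : forall w, w != z -> outflow (fun w => v 0 (enum_rank w)) w = 0.
      by move=> w Hw; have := HT0 w; rewrite /T (negbTE Hw).
    move=> w; case: (eqVneq w z) => [->|]; last exact: Hne.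
    have := sum_outflow (fun w => v 0 (enum_rank w)); rewrite (bigD1 z) //= big1 ?addr0 //; move=> u; exact: Hne.
  apply/rowP => i; rewrite mxE.
  have := harmonic0 Ho Hz (enum_val i); rewrite enum_valK => ->.
  done.
have Hdet : \det A != 0.
  apply/det0P => -[v Hv0 Hv]; by rewrite (Hinj v Hv) eqxx in Hv0.
have Hunit : A \in unitmx by rewrite unitmxE unitfE.
pose b : 'rV[R]_n := \row_j (if enum_val j == z then (0:R) else (enum_val j == y)%:R - (enum_val j == z)%:R).
pose v := b *m invmx A.
have Hv : v *m A = b by rewrite /v mulmxKV.
exists (fun w => v 0 (enum_rank w)).
have HTb : forall w, T (fun w => v 0 (enum_rank w)) w =
    if w == z then 0 else (w == y)%:R - (w == z)%:R.
  by move=> w; rewrite HT Hv mxE enum_rankK.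
have Hz : v 0 (enum_rank z) = 0 by have := HTb z; rewrite /T eqxx.
have Hne : forall w, w != z -> outflow (fun w => v 0 (enum_rank w)) w = (w == y)%:R - (w == z)%:R.
  by move=> w Hw; have := HTb w; rewrite /T (negbTE Hw).
split => // w; case: (eqVneq w z) => [->|Hw]; last by rewrite Hne // (negbTE Hw).
have HD : \sum_w (outflow (fun w => v 0 (enum_rank w)) w - ((w == y)%:R - (w == z)%:R)) = 0.
  by rewrite sumrB sum_outflow sumrB !sum_delta1 subrr subrr.
move: HD; rewrite (bigD1 z) //= big1 ?addr0; last first.
  by move=> u Hu; rewrite Hne // subrr.
by move/eqP; rewrite subr_eq0 eqxx => /eqP.
Qed.

Lemma voltage_ok z y : is_voltage src dst len z y (voltage src dst len z y).
Proof.
rewrite /voltage; case: excluded_middle_informative => [H|H].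
  exact: proj2_sig (constructive_indefinite_description _ H).
by case: H; exact: voltage_exists.
Qed.

Lemma jz_eq z y f : is_voltage src dst len z y f -> forall x, jz src dst len z x y = f x.
Proof. move=> Hf x; rewrite /jz; exact: (is_voltage_uniq (voltage_ok z y) Hf). Qed.

Lemma res_nonneg z y f : is_voltage src dst len z y f -> 0 <= f y /\ (f y = 0 -> forall x, f x = 0).
Proof.
move=> [fz Hf].
have Hs : f y = \sum_e (f (src e) - f (dst e)) * (f (src e) - f (dst e)) / len e.
  rewrite -green.
  under eq_bigr do rewrite Hf mulrBr.
  by rewrite sumrB !sum_delta fz subr0.
split.
  rewrite Hs sumr_ge0 // => e _; apply: divr_ge0; [by rewrite -expr2 sqr_ge0 | exact: ltW].
move=> H0; rewrite H0 in Hs; have Hed := energy0 (esym Hs).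
apply: (harmonic0 (z := z)) => // w; rewrite /Defs.outflow big1 // => e _.
by rewrite Hed; case: eqP => [<-|_]; case: eqP => [<-|_]; rewrite ?Hed ?subrr ?mul0r ?addr0 ?add0r.
Qed.

End Gen.

Section Main.
Variables (R : realFieldType) (V E : finType) (src dst : E -> V) (len : E -> R) (e : E).
Hypothesis Hlen : forall e, 0 < len e.
Hypothesis Hconn : connectedG src dst.

Local Notation a := (src e).
Local Notation b := (dst e).
Local Notation L := (len e).
Local Notation out := (outflow src dst len).
Local Notation dsrc := (del_end e src).
Local Notation ddst := (del_end e dst).
Local Notation dlen := (del_len e len).
Local Notation out' := (outflow dsrc ddst dlen).
Local Notation cm := (cmap a b).
Local Notation csrc := (con_end e a b src).
Local Notation cdst := (con_end e a b dst).
Local Notation outb := (outflow csrc cdst dlen).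

Lemma Hdlen : forall e' : del_edges e, 0 < dlen e'.
Proof. by move=> e'; exact: Hlen. Qed.

Lemma split_edge (f : V -> R) w :
  out f w = out' f w + ((w == a)%:R - (w == b)%:R) * (f a - f b) / L.
Proof.
rewrite /Defs.outflow (bigD1 e) //= addrC; congr (_ + _); last first.
  by rewrite ![w == _]eq_sym; case: eqP => [<-|_]; case: eqP => [->|_] /=;
    rewrite ?subrr ?mul0r ?addr0 ?add0r ?subr0 ?sub0r ?mul1r //; ring.
rewrite (reindex_omap (val : del_edges e -> E) insub); last first.
  by move=> i Hi; rewrite insubT.
apply: eq_bigl => -[i Hi] /=; rewrite insubT Hi /=; apply/eqP; congr Some; exact: val_inj.
Qed.

Lemma val_cm w : val (cm w) = if w == b then a else w.
Proof.
rewrite val_insubd /=; case: (eqVneq w b) => [->|Hw] /=; first by case: eqP.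
by [].
Qed.

Lemma cm_b : cm b = cm a.
Proof. apply: val_inj; rewrite !val_cm eqxx; case: eqP => [->|] //. Qed.

Lemma val_cm_a : val (cm a) = a.
Proof. by rewrite val_cm; case: eqP. Qed.

Lemma cm_val (u : cvert a b) : cm (val u) = u.
Proof. exact: valKd. Qed.

Lemma contract (Wb : cvert a b -> R) vb :
  outb Wb vb = \sum_w (cm w == vb)%:R * out' (fun w => Wb (cm w)) w.
Proof.
rewrite outflow_swap /Defs.outflow; apply: eq_bigr => e' _.
rewrite /Defs.con_end /Defs.del_end /Defs.del_len.
case: eqP => [<-|_]; case: eqP => [<-|_] /=; rewrite ?mul1r ?mul0r ?add0r ?addr0 ?mulrDl //.
by rewrite mul0r.
Qed.

Lemma step_bar u w : adjG src dst u w -> connect (adjG csrc cdst) (cm u) (cm w).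
Proof.
case/existsP => e0 He0; case: (eqVneq e0 e) => [Ee|Hne].
  subst e0; have -> : cm u = cm w.
    by case/orP: He0 => /andP[/eqP<- /eqP<-]; rewrite cm_b.
  exact: connect0.
apply: connect1; apply/existsP; exists (exist _ e0 Hne : del_edges e).
rewrite /con_end /=.
by case/orP: He0 => /andP[/eqP<- /eqP<-]; rewrite !eqxx ?orbT.
Qed.

Lemma conn_bar : connectedG csrc cdst.
Proof.
apply/forallP => ub; apply/forallP => vb.
rewrite -(cm_val ub) -(cm_val vb).
have : connect (adjG src dst) (val ub) (val vb) by move/forallP: Hconn => /(_ (val ub))/forallP.
case/connectP => p; elim: p (val ub) => [|y p IH] u /=; first by move=> _ ->; exact: connect0.
case/andP => Huy Hp Hl; apply: connect_trans (step_bar Huy) _; exact: IH.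
Qed.

Lemma nonbridge x (Hc' : connectedG dsrc ddst) :
  eff_res src dst len a x + eff_res src dst len b x =
  2 * eff_res csrc cdst dlen (cm x) (cm a)
  + L * eff_res dsrc ddst dlen a b / (L + eff_res dsrc ddst dlen a b)
  - 2 * (L * jz dsrc ddst dlen a x b * jz dsrc ddst dlen b x a
         / (eff_res dsrc ddst dlen a b * (L + eff_res dsrc ddst dlen a b))).
Proof.
set phi := voltage dsrc ddst dlen b a.
set psi := voltage dsrc ddst dlen b x.
have [phib Hphi] : is_voltage dsrc ddst dlen b a phi := voltage_ok Hdlen Hc' b a.
have [psib Hpsi] : is_voltage dsrc ddst dlen b x psi := voltage_ok Hdlen Hc' b x.
have -> : eff_res dsrc ddst dlen a b = phi a by [].
have -> : jz dsrc ddst dlen b x a = phi x by [].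
have -> : jz dsrc ddst dlen a x b = phi a - phi x.
  apply: (jz_eq Hdlen Hc' (f := fun w => phi a - phi w)); split; first by rewrite subrr.
  move=> w; rewrite (outflow_ext _ _ _ (g := fun v => (-1) * phi v + 0 * phi v + phi a)).
    by rewrite outflow_lin Hphi; ring.
  by move=> v; ring.
have [Rge0 R0] := res_nonneg Hdlen Hc' (conj phib Hphi).
have Hts : psi a = phi x.
  have := green_sym dsrc ddst dlen phi psi.
  under eq_bigr do rewrite Hpsi mulrBr.
  under [in RHS]eq_bigr do rewrite Hphi mulrBr.
  by rewrite !sumrB !sum_delta phib psib !subr0 => ->.
set Ri := phi a; set s := phi x; set P := psi x.
have HL : L != 0 by rewrite gt_eqF.
have HLR : L + Ri != 0 by rewrite gt_eqF // ltr_wpDr.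
have comb : forall k1 k2 k3 w,
    out (fun v => k1 * phi v + k2 * psi v + k3) w =
    k1 * ((w == a)%:R - (w == b)%:R) + k2 * ((w == x)%:R - (w == b)%:R)
    + ((w == a)%:R - (w == b)%:R) * (k1 * Ri + k2 * s) / L.
  move=> k1 k2 k3 w; rewrite split_edge outflow_lin Hphi Hpsi phib psib Hts.
  congr (_ + _); rewrite /Ri /s; congr (_ * _ / _); ring.
pose c1 := (L + s) / (L + Ri).
have -> : eff_res src dst len a x = c1 * Ri - s - (c1 * s - P).
  rewrite /eff_res (jz_eq Hlen Hconn (f := fun v => c1 * phi v + (-1) * psi v + (P - c1 * s))).
    by rewrite Hts /Ri /s; ring.
  split; first by rewrite /s /P; ring.
  move=> w; rewrite comb /c1; field; by rewrite HL HLR.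
pose c2 := s / (L + Ri).
have -> : eff_res src dst len b x = - (c2 * s - P).
  rewrite /eff_res (jz_eq Hlen Hconn (f := fun v => c2 * phi v + (-1) * psi v + (P - c2 * s))).
    by rewrite phib psib; ring.
  split; first by rewrite /s /P; ring.
  move=> w; rewrite comb /c2; field; by rewrite HL HLR.
have Hzero : psi a - s / Ri * Ri = 0.
  rewrite Hts -/s; have [Ri0|RiN0] := eqVneq Ri 0.
    by rewrite /s (R0 Ri0 x) !mul0r subrr.
  by field.
have -> : eff_res csrc cdst dlen (cm x) (cm a) = P - s / Ri * s.
  pose Wb := fun vb : cvert a b => psi (val vb) - s / Ri * phi (val vb).
  have HW : forall w, Wb (cm w) = 1 * psi w + (- (s / Ri)) * phi w + 0.
    move=> w; rewrite /Wb val_cm; case: eqP => [->|_]; last by ring.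
    by rewrite phib psib; rewrite -/Ri; move: Hzero; rewrite /=; lra.
  rewrite /eff_res (jz_eq Hdlen conn_bar (f := Wb)).
    by rewrite HW /P /s; ring.
  split; first by rewrite /Wb val_cm_a.
  move=> vb; rewrite contract (eq_bigr (fun w => (cm w == vb)%:R * (w == x)%:R
       - (cm w == vb)%:R * (w == b)%:R - s / Ri * ((cm w == vb)%:R * (w == a)%:R)
       + s / Ri * ((cm w == vb)%:R * (w == b)%:R))); last first.
    move=> w _; rewrite (outflow_ext _ _ _ _ HW) outflow_lin Hphi Hpsi; ring.
  rewrite !big_split /= !sumrN -!mulr_sumr !sum_delta cm_b ![vb == _]eq_sym; ring.
have [Ri0|RiN0] := eqVneq Ri 0.
  have s0 : s = 0 by rewrite /s (R0 Ri0 x).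
  rewrite Ri0 s0 /c1 /c2 !(mulr0, mul0r, addr0, invr0, subr0, sub0r, oppr0); ring.
rewrite /c1 /c2; field; by rewrite HLR RiN0.
Qed.

Lemma cm_eq u w : (cm u == cm w) = (u == w) || ((u \in [:: a; b]) && (w \in [:: a; b])).
Proof.
rewrite -(inj_eq val_inj) !val_cm !inE.
case: (eqVneq u b) => [->|ub]; case: (eqVneq w b) => [->|wb] /=;
  rewrite ?eqxx ?orbT ?andbT ?orbF //.
- by rewrite (negbTE ub).
- by case: (u =P a) => [->|_]; rewrite ?andbF ?orbF // ?andbT [w == _]eq_sym ?orbb.
Qed.

Lemma bridge x (Hc' : ~~ connectedG dsrc ddst) :
  eff_res src dst len a x + eff_res src dst len b x =
  2 * eff_res csrc cdst dlen (cm x) (cm a) + L.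
Proof.
pose S : pred V := connect (adjG dsrc ddst) x.
have Hsym : connect_sym (adjG dsrc ddst) := sym_connect_sym (adjG_sym dsrc ddst).
have Hcross : forall e', S (dsrc e') = S (ddst e').
  move=> e'; have := connect_closed Hsym x; move/(_ (dsrc e') (ddst e')).
  apply; apply/existsP; exists e'; by rewrite !eqxx.
have Sx : S x by exact: connect0.
have Hone : S a != S b.
  apply/negP => /eqP Hab; move/negP: Hc'; apply.
  have Hcl : closed (adjG src dst) S.
    move=> u w /existsP[e0 He0]; case: (eqVneq e0 e) => [Ee|Hne].
      subst e0; by case/orP: He0 => /andP[/eqP<- /eqP<-].
    have := Hcross (exist _ e0 Hne); rewrite /Defs.del_end /=.
    by case/orP: He0 => /andP[/eqP-> /eqP->].
  have Sall : forall w, S w.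
    move=> w; have := closed_connect Hcl (x := x) (y := w).
    move/forallP: Hconn => /(_ x)/forallP/(_ w) Hxw; by move/(_ Hxw); rewrite -topredE /= Sx.
  apply/forallP => u; apply/forallP => v.
  apply: connect_trans (Sall v); by rewrite Hsym; exact: Sall.
have Hab : a != b by apply: contraNneq Hone => ->.
pose Wb := voltage csrc cdst dlen (cm a) (cm x).
have [Wa Hwb] : is_voltage csrc cdst dlen (cm a) (cm x) Wb := voltage_ok Hdlen conn_bar _ _.
pose W := fun w => Wb (cm w).
have Wa' : W a = 0 by [].
have Wb' : W b = 0 by rewrite /W cm_b.
have HF : forall vb, \sum_u (cm u == vb)%:R * out' W u = (vb == cm x)%:R - (vb == cm a)%:R.
  by move=> vb; rewrite -contract Hwb.
have Hout_gen : forall w, w \notin [:: a; b] -> out' W w = (w == x)%:R.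
  move=> w Hw; have := HF (cm w).
  rewrite (eq_bigr (fun u => out' W u * (u == w)%:R)); last first.
    by move=> u _; rewrite cm_eq (negbTE Hw) andbF orbF mulrC.
  have [wa wb] : w != a /\ w != b by move: Hw; rewrite !inE negb_or => /andP.
  by rewrite sum_delta => ->; rewrite !cm_eq (negbTE Hw) /= !orbF (negbTE wa) subr0.
pose c := if S a then a else b.
pose d := if S a then b else a.
have Sc : S c by rewrite /c; case: ifP => // /negbT; move: Hone; case: (S a); case: (S b).
have Sd : ~~ S d by rewrite /d; case: ifP => // H; move: Hone; rewrite H; case: (S b).
have Hcd : ((c == a) && (d == b)) || ((c == b) && (d == a)).
  by rewrite /c /d; case: (S a); rewrite !eqxx ?orbT.
have Hxd : x != d by apply: contraNneq Sd => <-.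
have Hd0 : out' W d = 0.
  have Hcl' : forall e', (predC S) (dsrc e') = (predC S) (ddst e') by move=> e' /=; rewrite Hcross.
  have := @sum_closed _ _ _ dsrc ddst dlen (predC S) W Hcl'.
  rewrite (bigD1 d) //= Sd big1 ?addr0 ?mul1r //.
  move=> w Hwd; case: (boolP (S w)) => Sw /=; first by rewrite mul0r.
  have Hwc : w != c by apply: contraNneq Sw => ->.
  rewrite mul1r Hout_gen; first by have -> : (w == x) = false by apply: contraNF Sw => /eqP ->.
  rewrite !inE; apply/norP.
  by case/orP: Hcd => /andP[/eqP<- /eqP<-]; split.
have Hc0 : out' W c = (x == c)%:R - 1.
  have := HF (cm a).
  rewrite (eq_bigr (fun u => out' W u * (u == a)%:R + out' W u * (u == b)%:R)); last first.
    move=> u _; rewrite cm_eq !inE eqxx /= andbT.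
    case: (eqVneq u a) => [->|ua]; first by rewrite (negbTE Hab) /= mulr1 mulr0 addr0 mul1r.
    by case: (eqVneq u b) => [->|ub] /=; rewrite ?mulr1 ?mulr0 ?add0r ?addr0 ?mul1r ?mul0r.
  rewrite big_split /= !sum_delta eqxx cm_eq !inE eqxx /=.
  case/orP: Hcd => /andP[/eqP Ec /eqP Ed]; rewrite -Ec -Ed in Hxd Hd0 *.
    by rewrite Hd0 addr0 (negbTE Hxd) orbF [c == x]eq_sym orbb => ->.
  by rewrite Hd0 add0r [d == x]eq_sym (negbTE Hxd) /= => ->.
have Hout : forall w, out' W w = (w == x)%:R - (w == c)%:R.
  move=> w; case: (eqVneq w c) => [->|wc]; first by rewrite Hc0 eq_sym.
  have Hdc : d != c by apply: contraNneq Sd => ->.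
  case: (eqVneq w d) => [->|wd]; first by rewrite Hd0 [d == x]eq_sym (negbTE Hxd) ?(negbTE Hdc) ?subrr.
  rewrite Hout_gen ?(negbTE wc) ?subr0 //; rewrite !inE; apply/norP.
  by case/orP: Hcd => /andP[/eqP<- /eqP<-]; split.
pose I := fun w : V => ((predC S) w)%:R : R.
have HI : forall w, out' I w = 0.
  by move=> w; apply: outflow_closed => e' /=; rewrite Hcross.
have Ec : eff_res src dst len c x = W x.
  rewrite /eff_res (jz_eq Hlen Hconn (f := fun v => (-1) * W v + 0 * W v + W x)).
    by case/orP: Hcd => /andP[/eqP-> _]; rewrite ?Wa' ?Wb'; ring.
  split; first by ring.
  move=> w; rewrite split_edge outflow_lin Hout Wa' Wb'; ring.
have Ed : eff_res src dst len d x = W x + L.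
  rewrite /eff_res (jz_eq Hlen Hconn (f := fun v => (-1) * W v + L * I v + W x)).
    rewrite /I /= Sd; case/orP: Hcd => /andP[_ /eqP->]; rewrite ?Wa' ?Wb' /=; ring.
  split; first by rewrite /I /= Sx /=; ring.
  move=> w; rewrite split_edge outflow_lin Hout HI Wa' Wb' /I /=.
  case/orP: Hcd => /andP[/eqP Ec' /eqP Ed']; rewrite Ec' in Sc *; rewrite Ed' in Sd *;
    rewrite (negbTE Sd) Sc /=; field; by rewrite gt_eqF.
have -> : eff_res csrc cdst dlen (cm x) (cm a) = W x by [].
case/orP: Hcd => /andP[/eqP Ec' /eqP Ed']; rewrite -Ec' -Ed' Ec Ed; ring.
Qed.

End Main.

Theorem lemma3p1 (R : realFieldType) (V E : finType) (src dst : E -> V)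
    (len : E -> R) (Hlen : forall e, 0 < len e) (Hconn : connectedG src dst)
    (p : V) (e : E) :
  let pi := src e in
  let qi := dst e in
  let Li := len e in
  (* Gamma - e_i *)
  let dsrc := del_end e src in
  let ddst := del_end e dst in
  let dlen := del_len e len in
  (* contracted graph bar Gamma_i *)
  let csrc := con_end e pi qi src in
  let cdst := con_end e pi qi dst in
  let rbar := eff_res csrc cdst dlen (cmap pi qi p) (cmap pi qi pi) in
  eff_res src dst len pi p + eff_res src dst len qi p =
  if connectedG dsrc ddst then
    let Ri := eff_res dsrc ddst dlen pi qi in
    let Rap := jz dsrc ddst dlen pi p qi in
    let Rbp := jz dsrc ddst dlen qi p pi in
    2 * rbar + Li * Ri / (Li + Ri) - 2 * (Li * Rap * Rbp / (Ri * (Li + Ri)))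
  else
    (* e_i is a bridge: limit R_i -> oo of the right-hand side *)
    2 * rbar + Li.
Proof.
move=> pi qi Li dsrc ddst dlen csrc cdst rbar.
case: ifP => Hc'.
  exact: (nonbridge Hlen Hconn p Hc').
exact: (bridge Hlen Hconn p (negbT Hc')).
Qed.
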